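(* Let $Q$ be a dimer quiver with dimer algebra $A_Q$, and let $t:=\sum_{i\in Q_0}u_i\in A_Q$. Then $\mathbb{C}[t]\subseteq Z(A_Q)$, the centre of $A_Q$.
   Context: A quiver with faces is a finite quiver $Q=(Q_0,Q_1)$ with a finite set $Q_2$ of faces and a map $\partial$ sending each face to an oriented cycle. A dimer quiver is one with $Q_2=Q_2^+\sqcup Q_2^-$ such that: no loops; each arrow lies on the boundary of one or two faces, and if two, one in $Q_2^+$ and one in $Q_2^-$; at each vertex $i$ the incidence graph (vertices: arrows at $i$; edge between $\alpha,\beta$ if ''$\alpha$ into $i$, $\beta$ out of $i$'' is part of a face boundary) is non-empty and connected. An arrow is internal if it lies on two faces. Paths compose left to right. The dimer algebra $A_Q$ is the path algebra $\mathbb{C}Q$ modulo the ideal generated by $p_{F_1}-p_{F_2}$ for each internal arrow $\alpha$, where $F_1\in Q_2^+$, $F_2\in Q_2^-$ are the two faces containing $\alpha$ and $\alpha p_{F_j}$ is $\partial F_j$ read starting with $\alpha$. For each vertex $i$, the boundary cycles of all faces through $i$, read as cycles starting and ending at $i$, are equal in $A_Q$; $u_i$ denotes this element. *)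

(* Defs.v *)
(* The path algebra K Q is modelled by finite formal K-linear combinations of
   paths (seq (K * qpath)), compared through their coefficient functions; the
   dimer algebra A_Q = K Q / I is handled by the ideal-membership predicate
   [in_dimer_ideal], so that "z is central in A_Q" reads
   "forall x in KQ, z x - x z \in I". *)
From HB Require Import structures.
From mathcomp Require Import all_boot all_algebra.
From mathcomp Require Import Rstruct complex.
Set Implicit Arguments. Unset Strict Implicit. Unset Printing Implicit Defensive.
Import GRing.Theory.
Local Open Scope ring_scope.

Definition Cplx : fieldType := (Rdefinitions.R)[i].

Section Dimer.
Variables (Q0 Q1 Q2 : finType) (s t : Q1 -> Q0).

Definition oriented_cycle (c : seq Q1) : bool :=
  (c != [::]) && cycle (fun a b => t a == s b) c.

Definition cyc_adj (c : seq Q1) (a b : Q1) : bool :=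
  has (fun k => (nth a c k == a) && (nth a c ((k + 1) %% size c) == b))
      (iota 0 (size c)).

Variables (bnd : Q2 -> seq Q1) (pos : Q2 -> bool).
(* Q2^+ = faces F with pos F, Q2^- = faces F with ~~ pos F. *)

Definition face_occ (a : Q1) : nat := (\sum_(F : Q2) count_mem a (bnd F))%N.

Definition arrow_at (i : Q0) (a : Q1) : bool := (s a == i) || (t a == i).

Definition incid (i : Q0) (a b : Q1) : bool :=
  [&& t a == i, s b == i & [exists F : Q2, cyc_adj (bnd F) a b]].

Definition incid_sym (i : Q0) : rel Q1 := fun a b => incid i a b || incid i b a.

Definition is_dimer_quiver : Prop :=
  [/\ forall F, oriented_cycle (bnd F),
      forall a : Q1, s a != t a,
      forall a : Q1, face_occ a = 1%N \/
        (face_occ a = 2%N /\ exists F1 F2, [&& pos F1, ~~ pos F2,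
                                    a \in bnd F1 & a \in bnd F2]) &
      forall i : Q0, (exists a, arrow_at i a) /\
        forall a b, arrow_at i a -> arrow_at i b -> connect (incid_sym i) a b].

Variable K : fieldType.

(* a path: start vertex and list of arrows (composed left to right) *)
Definition qpath : Type := (Q0 * seq Q1)%type.

Definition valid_path (p : qpath) : bool :=
  match p.2 with
  | [::] => true
  | a :: l => (s a == p.1) && path (fun x y => t x == s y) a l
  end.

Definition pend (p : qpath) : Q0 := last p.1 (map t p.2).

Definition pcat (p q : qpath) : qpath := (p.1, p.2 ++ q.2).

Definition elt : Type := seq (K * qpath).

Definition valid_elt (x : elt) : bool := all (fun kp => valid_path kp.2) x.

Definition coef (x : elt) (p : qpath) : K :=
  \sum_(kp <- x | kp.2 == p) kp.1.

Definition eadd (x y : elt) : elt := x ++ y.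
Definition escale (c : K) (x : elt) : elt := [seq (c * kp.1, kp.2) | kp <- x].
Definition esub (x y : elt) : elt := eadd x (escale (-1) y).
Definition emul (x y : elt) : elt :=
  flatten [seq [seq (kp.1 * kq.1, pcat kp.2 kq.2) | kq <- y & pend kp.2 == kq.2.1]
          | kp <- x].
Definition eone : elt := [seq (1, (i, [::])) | i <- enum Q0].
Definition epath (p : qpath) : elt := [:: (1, p)].
Definition epoly (P : {poly K}) (z : elt) : elt :=
  foldr (fun c acc => eadd (escale c eone) (emul z acc)) [::] P.

(* alpha p_F is the boundary of F read starting with alpha *)
Definition p_face (a : Q1) (F : Q2) : qpath :=
  (t a, behead (rot (index a (bnd F)) (bnd F))).

(* generating relations p_F1 - p_F2, for an (internal) arrow a lying on
   F1 in Q2^+ and F2 in Q2^- *)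
Definition is_rel (r : Q1 * Q2 * Q2) : bool :=
  [&& pos r.1.2, ~~ pos r.2, r.1.1 \in bnd r.1.2 & r.1.1 \in bnd r.2].

Definition rel_elt (r : Q1 * Q2 * Q2) : elt :=
  esub (epath (p_face r.1.1 r.1.2)) (epath (p_face r.1.1 r.2)).

Definition in_dimer_ideal (x : elt) : Prop :=
  exists L : seq (K * qpath * (Q1 * Q2 * Q2) * qpath),
    all (fun w => [&& valid_path w.1.1.2, is_rel w.1.2 & valid_path w.2]) L /\
    forall p, coef x p =
      coef (flatten [seq escale w.1.1.1
                        (emul (emul (epath w.1.1.2) (rel_elt w.1.2)) (epath w.2))
                    | w <- L]) p.

(* c is the boundary cycle of a face through i, read starting and ending at i *)
Definition face_cycle_at (i : Q0) (c : seq Q1) : Prop :=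
  exists F : Q2, exists2 k, (k < size (bnd F))%N &
    c = rot k (bnd F) /\ (if c is a :: _ then s a == i else false).

End Dimer.

(* Main.v *)
Require Import Defs.
From mathcomp Require Import all_boot all_algebra.
From mathcomp Require Import ring zify.
From Stdlib Require Import Lia.
Set Implicit Arguments. Unset Strict Implicit. Unset Printing Implicit Defensive.
Import GRing.Theory.
Local Open Scope ring_scope.

Section Alg.
Variables (Q0 Q1 : finType) (t : Q1 -> Q0) (K : fieldType).
Local Notation elt := (elt Q0 Q1 K).
Local Notation qpath := (qpath Q0 Q1).
Implicit Types (x y z : elt) (kp : K * qpath).

Definition lin (x : elt) (g : qpath -> K) : K := \sum_(kp <- x) kp.1 * g kp.2.
Definition eqv (x y : elt) := forall p, coef x p = coef y p.

Lemma coefE x p : coef x p = lin x (fun r => (r == p)%:R).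
Proof.
rewrite /coef /lin big_mkcond /=; apply: eq_bigr => kp _.
by case: eqP => _; rewrite ?mulr1 ?mulr0.
Qed.

Lemma lin_cat x y g : lin (x ++ y) g = lin x g + lin y g.
Proof. by rewrite /lin big_cat. Qed.
Lemma lin_nil g : lin [::] g = 0.
Proof. by rewrite /lin big_nil. Qed.
Lemma lin_cons kp x g : lin (kp :: x) g = kp.1 * g kp.2 + lin x g.
Proof. by rewrite /lin big_cons. Qed.
Lemma lin_escale c x g : lin (escale c x) g = c * lin x g.
Proof.
rewrite /lin big_map big_distrr; apply: eq_bigr => kp _ /=; by rewrite mulrA.
Qed.
Lemma lin_ext x g g' : g =1 g' -> lin x g = lin x g'.
Proof. by move=> e; apply: eq_bigr => kp _; rewrite e. Qed.
Lemma lin0 x : lin x (fun _ => 0) = 0.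
Proof. by rewrite /lin big1 // => kp _; rewrite mulr0. Qed.
Lemma lin_add x g h : lin x (fun r => g r + h r) = lin x g + lin x h.
Proof. by rewrite /lin -big_split; apply: eq_bigr => kp _; rewrite mulrDr. Qed.
Lemma lin_scalef x c g : lin x (fun r => c * g r) = c * lin x g.
Proof.
rewrite /lin big_distrr; apply: eq_bigr => kp _ /=.
by rewrite mulrA (mulrC kp.1) mulrA.
Qed.

Lemma emul_cons kp x y : emul t (kp :: x) y =
  [seq (kp.1 * kq.1, pcat kp.2 kq.2) | kq <- y & pend t kp.2 == kq.2.1] ++ emul t x y.
Proof. by []. Qed.

Lemma lin_emul x y G : lin (emul t x y) G =
  lin x (fun r1 => lin y (fun r2 => if pend t r1 == r2.1 then G (pcat r1 r2) else 0)).
Proof.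
elim: x => [|kp x IH]; first by rewrite /emul /= !lin_nil.
rewrite emul_cons lin_cat IH lin_cons; congr (_ + _).
rewrite /lin big_map big_filter big_mkcond big_distrr /=; apply: eq_bigr => kq _.
by case: ifP => _; rewrite ?mulr0 ?mulrA.
Qed.

Lemma sum_pred1 (T : eqType) (S : seq T) (j : T) (F : T -> K) :
  uniq S -> j \in S -> \sum_(i <- S) (if i == j then F i else 0) = F j.
Proof.
elim: S => [//|a S IH] /= /andP[aS uS]; rewrite in_cons big_cons.
case/orP => [/eqP ->|jS].
  rewrite eqxx big1_seq ?addr0 // => i /andP[_ iS]; case: eqP => // e.
  by rewrite -e iS in aS.
have -> : (a == j) = false by apply/negP => /eqP e; rewrite e jS in aS.
by rewrite add0r IH.
Qed.

Lemma lin_supp x g (S : seq qpath) : uniq S -> (forall kp, kp \in x -> kp.2 \in S) ->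
  lin x g = \sum_(r <- S) coef x r * g r.
Proof.
move=> uS; elim: x => [|kp x IH] H.
  by rewrite lin_nil big1 // => r _; rewrite /coef big_nil mul0r.
rewrite lin_cons IH; last by move=> kq kqx; apply: H; rewrite in_cons kqx orbT.
rewrite /coef.
under [in RHS]eq_bigr => r _ do rewrite big_cons.
rewrite [RHS](eq_bigr (fun r => (if kp.2 == r then kp.1 else 0) * g r +
   (\sum_(j <- x | j.2 == r) j.1) * g r)); last first.
  by move=> r _; case: (kp.2 == r); rewrite ?mulrDl ?mul0r ?add0r.
rewrite big_split /=; congr (_ + _).
rewrite -(@sum_pred1 _ S kp.2 (fun r => kp.1 * g r) uS); last by apply: H; rewrite in_cons eqxx.
by apply: eq_bigr => r _; rewrite eq_sym; case: ifP; rewrite ?mul0r.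
Qed.

Lemma lin_congr x y g : eqv x y -> lin x g = lin y g.
Proof.
move=> e; set S := undup [seq kp.2 | kp <- x ++ y].
have uS : uniq S by apply: undup_uniq.
rewrite (@lin_supp x g S) ?(@lin_supp y g S) //.
- by apply: eq_bigr => r _; rewrite e.
- by move=> kp kpy; rewrite mem_undup; apply: map_f; rewrite mem_cat kpy orbT.
- by move=> kp kpx; rewrite mem_undup; apply: map_f; rewrite mem_cat kpx.
Qed.

Lemma eqv_refl x : eqv x x. Proof. by []. Qed.
Lemma eqv_sym x y : eqv x y -> eqv y x. Proof. by move=> e p; rewrite e. Qed.
Lemma eqv_trans x y z : eqv x y -> eqv y z -> eqv x z.
Proof. by move=> e1 e2 p; rewrite e1 e2. Qed.

Lemma coef_cat x y p : coef (x ++ y) p = coef x p + coef y p.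
Proof. by rewrite /coef big_cat. Qed.
Lemma coef_escale c x p : coef (escale c x) p = c * coef x p.
Proof. by rewrite !coefE lin_escale. Qed.
Lemma coef_nil p : coef ([::] : elt) p = 0.
Proof. by rewrite /coef big_nil. Qed.
Lemma coef_esub x y p : coef (esub x y) p = coef x p - coef y p.
Proof. by rewrite /esub /eadd coef_cat coef_escale mulN1r. Qed.

Lemma eqv_cat x x' y y' : eqv x x' -> eqv y y' -> eqv (x ++ y) (x' ++ y').
Proof. by move=> e1 e2 p; rewrite !coef_cat e1 e2. Qed.
Lemma eqv_escale c x x' : eqv x x' -> eqv (escale c x) (escale c x').
Proof. by move=> e p; rewrite !coef_escale e. Qed.
Lemma eqv_esub x x' y y' : eqv x x' -> eqv y y' -> eqv (esub x y) (esub x' y').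
Proof. by move=> e1 e2 p; rewrite !coef_esub e1 e2. Qed.

Lemma emul_congr x x' y y' : eqv x x' -> eqv y y' -> eqv (emul t x y) (emul t x' y').
Proof.
move=> e1 e2 p; rewrite !coefE !lin_emul (lin_congr _ e1).
by apply: lin_ext => r; apply: lin_congr.
Qed.

Lemma emul_catl x y z : emul t (x ++ y) z = emul t x z ++ emul t y z.
Proof. by rewrite /emul map_cat flatten_cat. Qed.

Lemma emul_catr x y z : eqv (emul t x (y ++ z)) (emul t x y ++ emul t x z).
Proof.
move=> p; rewrite coef_cat !coefE !lin_emul -lin_add.
by apply: lin_ext => r; rewrite lin_cat.
Qed.

Lemma emul_scalel c x y : eqv (emul t (escale c x) y) (escale c (emul t x y)).
Proof. by move=> p; rewrite coef_escale !coefE !lin_emul lin_escale. Qed.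

Lemma emul_scaler c x y : eqv (emul t x (escale c y)) (escale c (emul t x y)).
Proof.
move=> p; rewrite coef_escale !coefE !lin_emul -lin_scalef.
by apply: lin_ext => r; rewrite lin_escale.
Qed.

Lemma emul_nilr x : eqv (emul t x [::]) [::].
Proof.
move=> p; rewrite coefE lin_emul coef_nil.
transitivity (lin x (fun _ => 0)); last exact: lin0.
by apply: lin_ext => r; rewrite lin_nil.
Qed.

Lemma pend_pcat r1 r2 : pend t r1 = r2.1 -> pend t (pcat r1 r2) = pend t r2.
Proof. by rewrite /pend /pcat /= map_cat last_cat => ->. Qed.

Lemma emul_assoc x y z : eqv (emul t (emul t x y) z) (emul t x (emul t y z)).
Proof.
move=> p; rewrite !coefE !lin_emul; apply: lin_ext => r1.
rewrite lin_emul; apply: lin_ext => r2.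
case: eqP => A.
  by apply: lin_ext => r3; rewrite pend_pcat //= /pcat /= catA.
symmetry; transitivity (lin z (fun _ => 0)); last exact: lin0.
by apply: lin_ext => r3 /=; case: (_ == _).
Qed.

Lemma emul_epath h a : emul t (epath K h) (epath K a) =
  if pend t h == a.1 then epath K (pcat h a) else [::].
Proof. by rewrite /emul /=; case: ifP => // _ /=; rewrite mul1r. Qed.

Lemma emul_nill x : emul t [::] x = [::].
Proof. by []. Qed.

End Alg.
Section Ideal.
Variables (Q0 Q1 Q2 : finType) (s t : Q1 -> Q0) (bnd : Q2 -> seq Q1) (pos : Q2 -> bool).
Variable K : fieldType.
Local Notation elt := (elt Q0 Q1 K).
Local Notation qpath := (qpath Q0 Q1).
Implicit Types (x y z : elt) (kp : K * qpath).
Local Notation I := (@in_dimer_ideal Q0 Q1 Q2 s t bnd pos K).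
Local Notation valid := (valid_path s t).
Local Notation velt := (@valid_elt Q0 Q1 s t K).

Definition Fl (L : seq (K * qpath * (Q1 * Q2 * Q2) * qpath)) : elt :=
  flatten [seq escale w.1.1.1 (emul t (emul t (epath K w.1.1.2)
      (rel_elt t bnd K w.1.2)) (epath K w.2)) | w <- L].

Lemma I_eqv x y : I x -> eqv x y -> I y.
Proof. by case=> L [HL HC] e; exists L; split => // p; rewrite -e HC. Qed.

Lemma I_zero x : (forall p, coef x p = 0) -> I x.
Proof. by move=> H; exists [::]; split => // p; rewrite H coef_nil. Qed.

Lemma I_cat x y : I x -> I y -> I (x ++ y).
Proof.
case=> L1 [H1 C1] [L2 [H2 C2]]; exists (L1 ++ L2); split; first by rewrite all_cat H1.
by move=> p; rewrite coef_cat C1 C2 map_cat flatten_cat coef_cat.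
Qed.

Lemma I_escale c x : I x -> I (escale c x).
Proof.
case=> L [HL HC]; exists [seq ((c * w.1.1.1, w.1.1.2), w.1.2, w.2) | w <- L].
split; first by rewrite all_map.
move=> p; rewrite coef_escale HC; elim: L {HL HC} => [|w L IH] /=.
  by rewrite !coef_nil mulr0.
by rewrite !coef_cat !coef_escale mulrDr IH mulrA.
Qed.

Lemma I_esub x y : I x -> I y -> I (esub x y).
Proof. by move=> Hx Hy; apply: I_cat => //; apply: I_escale. Qed.

Lemma I_gen a r b : valid a -> is_rel bnd pos r -> valid b ->
  I (emul t (emul t (epath K a) (rel_elt t bnd K r)) (epath K b)).
Proof.
move=> Ha Hr Hb; exists [:: ((1, a), r, b)]; split; first by rewrite /= Ha Hr Hb.
by move=> p; rewrite /= coef_cat coef_nil addr0 coef_escale mul1r.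
Qed.

Lemma valid_pcat p q : valid p -> valid q -> pend t p = q.1 -> valid (pcat p q).
Proof.
case: p => h l1; case: q => m l2; rewrite /valid_path /pcat /pend /=.
case: l1 => [|a l1] /=; first by move=> _ Hq e; rewrite e.
move=> /andP[-> Hp]; rewrite cat_path Hp /=.
case: l2 => [|b l2] //= /andP[/eqP <- ->]; rewrite andbT last_map => ->.
by [].
Qed.

Lemma velt_cat x y : velt x -> velt y -> velt (x ++ y).
Proof. by rewrite /valid_elt all_cat => -> ->. Qed.

Lemma velt_escale c x : velt x -> velt (escale c x).
Proof. by rewrite /valid_elt all_map. Qed.

Lemma velt_emul x y : velt x -> velt y -> velt (emul t x y).
Proof.
elim: x => [//|kp x IH] /= /andP[Hkp Hx] Hy; rewrite emul_cons.
apply: velt_cat; last exact: IH.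
apply/allP => w /mapP [kq]; rewrite mem_filter => /andP [/eqP P kqy] -> /=.
by apply: valid_pcat => //; move/allP: Hy => /(_ _ kqy).
Qed.

Lemma I_mull_path h z : valid h -> I z -> I (emul t (epath K h) z).
Proof.
move=> Hh [L [HL HC]].
apply: (I_eqv (x := emul t (epath K h) (Fl L))); last first.
  by apply: emul_congr => //; apply: eqv_sym.
elim: L {HC} HL => [|w L IH] /=.
  by move=> _; apply: I_zero => p; rewrite (emul_nilr _ _ p) coef_nil.
case/andP=> /and3P [Ha Hr Hb] HL.
apply: (I_eqv (x := emul t (epath K h) (escale w.1.1.1 (emul t (emul t (epath K w.1.1.2)
      (rel_elt t bnd K w.1.2)) (epath K w.2))) ++ emul t (epath K h) (Fl L)));
  last by apply: eqv_sym; apply: emul_catr.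
apply: I_cat; last exact: IH.
apply: I_eqv; last by apply: eqv_sym; apply: emul_scaler.
apply: I_escale.
apply: I_eqv; last first.
  apply: eqv_trans; last by apply: emul_assoc.
  apply: emul_congr; last exact: eqv_refl.
  by apply: emul_assoc.
rewrite emul_epath; case: ifP => [/eqP e|_].
  by apply: I_gen => //; apply: valid_pcat.
by apply: I_zero => p; rewrite !emul_nill coef_nil.
Qed.

Lemma I_mulr_path h z : valid h -> I z -> I (emul t z (epath K h)).
Proof.
move=> Hh [L [HL HC]].
apply: (I_eqv (x := emul t (Fl L) (epath K h))); last first.
  by apply: emul_congr => //; apply: eqv_sym.
elim: L {HC} HL => [|w L IH] /=.
  by move=> _; apply: I_zero => p; rewrite emul_nill coef_nil.
case/andP=> /and3P [Ha Hr Hb] HL.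
rewrite emul_catl; apply: I_cat; last exact: IH.
apply: I_eqv; last by apply: eqv_sym; apply: emul_scalel.
apply: I_escale.
apply: I_eqv; last by apply: eqv_sym; apply: emul_assoc.
rewrite emul_epath; case: ifP => [/eqP e|_].
  by apply: I_gen => //; apply: valid_pcat.
by apply: I_zero => p; rewrite (emul_nilr _ _ p) coef_nil.
Qed.

Lemma single_escale c h : [:: (c, h)] = escale c (epath K h) :> elt.
Proof. by rewrite /escale /= mulr1. Qed.

Lemma I_mull y z : velt y -> I z -> I (emul t y z).
Proof.
move=> + Hz; elim: y => [|[c h] y IH] /=.
  by move=> _; apply: I_zero => p; rewrite emul_nill coef_nil.
case/andP=> Hh Hy; rewrite -cat1s emul_catl; apply: I_cat; last exact: IH.
rewrite single_escale; apply: I_eqv; last by apply: eqv_sym; apply: emul_scalel.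
by apply: I_escale; apply: I_mull_path.
Qed.

Lemma I_mulr y z : velt y -> I z -> I (emul t z y).
Proof.
move=> + Hz; elim: y => [|[c h] y IH] /=.
  by move=> _; apply: I_zero => p; rewrite (emul_nilr _ _ p) coef_nil.
case/andP=> Hh Hy; rewrite -cat1s; apply: I_eqv; last by apply: eqv_sym; apply: emul_catr.
apply: I_cat; last exact: IH.
rewrite single_escale; apply: I_eqv; last by apply: eqv_sym; apply: emul_scaler.
by apply: I_escale; apply: I_mulr_path.
Qed.

End Ideal.
Section Central.
Variables (Q0 Q1 Q2 : finType) (s t : Q1 -> Q0) (bnd : Q2 -> seq Q1) (pos : Q2 -> bool).
Variable K : fieldType.
Local Notation elt := (elt Q0 Q1 K).
Local Notation qpath := (qpath Q0 Q1).
Implicit Types (x y z : elt) (kp : K * qpath).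
Local Notation I := (@in_dimer_ideal Q0 Q1 Q2 s t bnd pos K).
Local Notation valid := (valid_path s t).
Local Notation velt := (@valid_elt Q0 Q1 s t K).

Definition psim (p q : qpath) := I (esub (epath K p) (epath K q)).

Lemma psim_refl p : psim p p.
Proof. by apply: I_zero => r; rewrite coef_esub subrr. Qed.

Lemma psim_sym p q : psim p q -> psim q p.
Proof.
move=> H; apply: I_eqv (I_escale (-1) H) _ => r.
by rewrite coef_escale !coef_esub mulN1r opprB.
Qed.

Lemma psim_trans p q r : psim p q -> psim q r -> psim p r.
Proof.
move=> H1 H2; apply: I_eqv (I_cat H1 H2) _ => w.
by rewrite coef_cat !coef_esub addrA subrK.
Qed.

Lemma emul_esubr x y z : eqv (emul t x (esub y z)) (esub (emul t x y) (emul t x z)).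
Proof.
move=> p; rewrite (emul_catr _ _ _ _ p) !coef_cat; congr (_ + _).
by rewrite (emul_scaler _ _ _ _ p) !coef_escale.
Qed.

Lemma emul_esubl x y z : eqv (emul t (esub x y) z) (esub (emul t x z) (emul t y z)).
Proof.
move=> p; rewrite /esub /eadd emul_catl !coef_cat; congr (_ + _).
by rewrite (emul_scalel _ _ _ _ p) !coef_escale.
Qed.

Lemma psim_catl h p q : psim p q -> valid h -> pend t h = p.1 -> pend t h = q.1 ->
  psim (pcat h p) (pcat h q).
Proof.
move=> H Hh e1 e2; apply: I_eqv (I_mull_path Hh H) _.
apply: eqv_trans (emul_esubr _ _ _) _.
by rewrite !emul_epath -e1 -e2 !eqxx.
Qed.

Lemma psim_catr r p q : psim p q -> valid r -> pend t p = r.1 -> pend t q = r.1 ->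
  psim (pcat p r) (pcat q r).
Proof.
move=> H Hr e1 e2; apply: I_eqv (I_mulr_path Hr H) _.
apply: eqv_trans (emul_esubl _ _ _) _.
by rewrite !emul_epath e1 e2 !eqxx.
Qed.

Definition Central z := forall x, velt x -> I (esub (emul t z x) (emul t x z)).

Lemma Cen_eqv z : (forall x, eqv (emul t z x) (emul t x z)) -> Central z.
Proof. by move=> H x _; apply: I_zero => p; rewrite coef_esub H subrr. Qed.

Lemma Cen_nil : Central [::].
Proof.
apply: Cen_eqv => x p; rewrite emul_nill (emul_nilr _ _ p) //.
Qed.

Lemma Cen_cat z z' : Central z -> Central z' -> Central (z ++ z').
Proof.
move=> H1 H2 x Hx; apply: I_eqv (I_cat (H1 x Hx) (H2 x Hx)) _ => p.
rewrite coef_cat !coef_esub emul_catl (emul_catr _ _ _ _ p) !coef_cat.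
by rewrite opprD !addrA; congr (_ + _); rewrite -!addrA; congr (_ + _); rewrite addrC.
Qed.

Lemma Cen_escale c z : Central z -> Central (escale c z).
Proof.
move=> H x Hx; apply: I_eqv (I_escale c (H x Hx)) _ => p.
by rewrite coef_escale !coef_esub (emul_scalel _ _ _ _ p) (emul_scaler _ _ _ _ p)
  !coef_escale mulrBr.
Qed.

Lemma Cen_emul z z' : velt z -> velt z' -> Central z -> Central z' ->
  Central (emul t z z').
Proof.
move=> Vz Vz' H1 H2 x Hx.
have A := I_mull Vz (H2 x Hx).
have B := I_mulr Vz' (H1 x Hx).
apply: I_eqv (I_cat A B) _ => p.
rewrite coef_cat (emul_esubr _ _ _ p) (emul_esubl _ _ _ p) !coef_esub.
rewrite -(emul_assoc _ _ _ _ p) -(emul_assoc _ _ _ _ p) (emul_assoc _ _ _ _ p).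
by rewrite -(emul_assoc t x z z' p) addrA subrK.
Qed.

Lemma lin_sum (T : Type) (S : seq T) x (F : T -> qpath -> K) :
  lin x (fun r => \sum_(i <- S) F i r) = \sum_(i <- S) lin x (F i).
Proof.
rewrite /lin; under eq_bigr => kp _ do rewrite big_distrr.
by rewrite exchange_big.
Qed.

Lemma eone_l x : eqv (emul t (eone Q0 Q1 K) x) x.
Proof.
move=> p; rewrite !coefE lin_emul {1}/lin /eone big_map.
under eq_bigr => i _ do rewrite mul1r.
rewrite -lin_sum; apply: lin_ext => r /=.
rewrite /pend /=.
by rewrite (@sum_pred1 _ _ (enum Q0) r.1 (fun i => ((pcat (i, [::]) r) == p)%:R)) ?enum_uniq ?mem_enum //; case: r.
Qed.

Lemma eone_r x : eqv (emul t x (eone Q0 Q1 K)) x.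
Proof.
move=> p; rewrite !coefE lin_emul; apply: lin_ext => r /=.
rewrite /lin /eone big_map.
under eq_bigr => i _ do rewrite mul1r /= eq_sym.
by rewrite (@sum_pred1 _ _ (enum Q0) (pend t r) (fun i => ((pcat r (i, [::])) == p)%:R)) ?enum_uniq ?mem_enum // /pcat cats0; case: r.
Qed.

Lemma Cen_eone : Central (eone Q0 Q1 K).
Proof. by apply: Cen_eqv => x p; rewrite (eone_l x p) (eone_r x p). Qed.

Lemma velt_eone : velt (eone Q0 Q1 K).
Proof. by rewrite /valid_elt all_map; apply/allP. Qed.

Lemma Cen_foldr z : velt z -> Central z -> forall l : seq K,
  velt (foldr (fun c acc => eadd (escale c (eone Q0 Q1 K)) (emul t z acc)) [::] l) /\
  Central (foldr (fun c acc => eadd (escale c (eone Q0 Q1 K)) (emul t z acc)) [::] l).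
Proof.
move=> Vz Cz; elim=> [|c l [IH1 IH2]] /=; first by split => //; apply: Cen_nil.
split.
  by apply: velt_cat; [apply: velt_escale; apply: velt_eone | apply: velt_emul].
apply: Cen_cat; first by apply: Cen_escale; apply: Cen_eone.
exact: Cen_emul.
Qed.

End Central.
Section Dimer.
Variables (Q0 Q1 Q2 : finType) (s t : Q1 -> Q0) (bnd : Q2 -> seq Q1) (pos : Q2 -> bool).
Variable K : fieldType.
Hypothesis HQ : is_dimer_quiver s t bnd pos.
Local Notation elt := (elt Q0 Q1 K).
Local Notation qpath := (qpath Q0 Q1).
Local Notation I := (@in_dimer_ideal Q0 Q1 Q2 s t bnd pos K).
Local Notation valid := (valid_path s t).
Local Notation velt := (@valid_elt Q0 Q1 s t K).
Local Notation psim := (@psim Q0 Q1 Q2 s t bnd pos K).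

Lemma HQcyc F : cycle (fun a b => t a == s b) (bnd F) /\ bnd F != [::].
Proof. by case: HQ => H _ _ _; case/andP: (H F) => ? ?. Qed.

Lemma HQloop a : s a != t a.
Proof. by case: HQ. Qed.

Lemma cnt_pos (e : Q1) (c : seq Q1) : e \in c -> (0 < count_mem e c)%N.
Proof. by rewrite -has_pred1 has_count. Qed.

Lemma occ2 e G H : G != H -> (count_mem e (bnd G) + count_mem e (bnd H) <= face_occ bnd e)%N.
Proof.
move=> ne; rewrite /face_occ (bigD1 G) //= (bigD1 H) /=; last by rewrite eq_sym.
by rewrite addnA leq_addr.
Qed.

Lemma occ3 e G H J : G != H -> G != J -> H != J ->
  (count_mem e (bnd G) + count_mem e (bnd H) + count_mem e (bnd J) <= face_occ bnd e)%N.
Proof.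
move=> n1 n2 n3; rewrite /face_occ (bigD1 G) //= (bigD1 H) /=; last by rewrite eq_sym.
rewrite (bigD1 J) /=; last by rewrite eq_sym n2 eq_sym n3.
by rewrite !addnA leq_addr.
Qed.

Lemma occ_le1 e F : (count_mem e (bnd F) <= 1)%N.
Proof.
case: HQ => _ _ Hocc _; case: (Hocc e) => [H1|[H2 [F1 [F2 /and4P [p1 p2 m1 m2]]]]].
  by rewrite -H1 /face_occ (bigD1 F) //= leq_addr.
have nF : F1 != F2 by apply/eqP => e12; rewrite -e12 p1 in p2.
have [G [nG mG]] : exists G, G != F /\ e \in bnd G.
  case: (eqVneq F1 F) => [e1|n1]; last by exists F1.
  by exists F2; split => //; rewrite -e1 eq_sym.
have := occ2 e nG; rewrite H2.
have := cnt_pos mG; move: (count_mem e (bnd F)) (count_mem e (bnd G)) => a b.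
lia.
Qed.


Lemma rot_idx (e : Q1) (c : seq Q1) : e \in c ->
  rot (index e c) c = e :: behead (rot (index e c) c).
Proof. by move=> ec; rewrite /rot (drop_nth e) ?index_mem // nth_index. Qed.

Lemma pend_cycle x b rest : cycle (fun a b => t a == s b) (b :: rest) ->
  pend t (x, b :: rest) = s b.
Proof.
rewrite /= rcons_path => /andP [_ /eqP <-].
by rewrite /pend /= last_map.
Qed.

Lemma pend_pface e F : e \in bnd F -> pend t (p_face t bnd e F) = s e.
Proof.
move=> eF; have [Hc _] := HQcyc F.
have := rot_idx eF; rewrite /p_face; move: (behead _) => rest Hr.
have := Hc; rewrite -(rot_cycle (index e (bnd F))) Hr.
rewrite /= rcons_path => /andP [_ /eqP <-].
by rewrite /pend /= last_map.
Qed.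

Lemma psim_rel e F1 F2 : is_rel bnd pos (e, F1, F2) -> e \in bnd F1 -> e \in bnd F2 ->
  psim (p_face t bnd e F1) (p_face t bnd e F2).
Proof.
move=> Hr m1 m2.
have := @I_gen _ _ _ s t bnd pos K (t e, [::]) _ (s e, [::]) erefl Hr erefl.
move/I_eqv; apply.
apply: eqv_trans; first by apply: emul_congr; [apply: emul_esubr | apply: eqv_refl].
apply: eqv_trans; first by apply: emul_esubl.
rewrite !emul_epath /= !eqxx !emul_epath !pend_pface // !eqxx.
by rewrite /pcat /= !cats0.
Qed.

Lemma faces_pair e G1 G2 : e \in bnd G1 -> e \in bnd G2 ->
  psim (p_face t bnd e G1) (p_face t bnd e G2).
Proof.
move=> g1 g2; case: (eqVneq G1 G2) => [->|n12]; first exact: psim_refl.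
case: HQ => _ _ Hocc _; case: (Hocc e) => [H1|[H2 [F1 [F2 /and4P [p1 p2 m1 m2]]]]].
  have := occ2 e n12; rewrite H1.
  by have := cnt_pos g1; have := cnt_pos g2; lia.
have nF : F1 != F2 by apply/eqP => e12; rewrite -e12 p1 in p2.
have inF : forall G, e \in bnd G -> (G == F1) || (G == F2).
  move=> G mG; apply/negPn/negP; rewrite negb_or => /andP [n1 n2].
  have := occ3 e n1 n2 nF; rewrite H2.
  by have := cnt_pos mG; have := cnt_pos m1; have := cnt_pos m2; lia.
have r12 : is_rel bnd pos (e, F1, F2) by rewrite /is_rel /= p1 p2 m1 m2.
case/orP: (inF _ g1) => /eqP e1; case/orP: (inF _ g2) => /eqP e2; subst.
- by rewrite eqxx in n12.
- exact: psim_rel.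
- by apply: psim_sym; apply: psim_rel.
- by rewrite eqxx in n12.
Qed.

Lemma idx_uniq (x y : Q1) (c : seq Q1) k : (count_mem x c <= 1)%N -> (k < size c)%N ->
  nth y c k = x -> index x c = k.
Proof.
move=> Hc Hk Hn; have xc : x \in c by rewrite -Hn mem_nth.
case: (ltngtP (index x c) k) => // H.
- have t1 : x \in take k c by rewrite in_take.
  have t2 : x \in drop k c by rewrite (drop_nth y Hk) Hn mem_head.
  move: Hc; rewrite -(cat_take_drop k c) count_cat.
  by have := cnt_pos t1; have := cnt_pos t2; lia.
- have := before_find y H; rewrite /= Hn eqxx //.
Qed.

Definition cyc (i : Q0) (e : Q1) (F : Q2) : seq Q1 :=
  if s e == i then rot (index e (bnd F)) (bnd F) else rot (index e (bnd F)).+1 (bnd F).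

Lemma cyc_out i e F : s e = i -> e \in bnd F ->
  (i, cyc i e F) = pcat (i, [:: e]) (p_face t bnd e F).
Proof. by move=> se eF; rewrite /cyc se eqxx {1}(rot_idx eF). Qed.

Lemma cyc_in i e F : t e = i -> e \in bnd F ->
  (i, cyc i e F) = pcat (p_face t bnd e F) (s e, [:: e]).
Proof.
move=> te eF; have ne : (s e == i) = false.
  by apply/negP => /eqP se; have := HQloop e; rewrite se te eqxx.
rewrite /cyc ne -add1n rotD; last by rewrite add1n index_mem.
by rewrite (rot_idx eF) rot1_cons /pcat /p_face /= te cats1.
Qed.

Lemma cyc_faces i e G1 G2 : arrow_at s t i e -> e \in bnd G1 -> e \in bnd G2 ->
  psim (i, cyc i e G1) (i, cyc i e G2).
Proof.
move=> Ha g1 g2; case: (eqVneq (s e) i) => [se|nse].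
  rewrite !cyc_out //; apply: psim_catl => //; first exact: faces_pair.
  by rewrite /valid_path /= se eqxx.
have te : t e = i by case/orP: Ha => /eqP // se; rewrite se eqxx in nse.
rewrite !cyc_in //; apply: psim_catr => //; first exact: faces_pair.
- by rewrite /valid_path /= eqxx.
- exact: pend_pface.
- exact: pend_pface.
Qed.

Lemma incid_cyc i a b : incid s t bnd i a b ->
  exists F, [/\ a \in bnd F, b \in bnd F & cyc i a F = cyc i b F].
Proof.
case/and3P => /eqP ta /eqP sb /existsP [F]; rewrite /cyc_adj => /hasP [k].
rewrite mem_iota add0n => /andP [_ Hk] /andP [/eqP Ha /eqP Hb].
have [_ nz] := HQcyc F.
have sz : (0 < size (bnd F))%N by case: (bnd F) nz.
have aF : a \in bnd F by rewrite -Ha mem_nth.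
have Hk' : ((k + 1) %% size (bnd F) < size (bnd F))%N by apply: ltn_pmod.
have bF : b \in bnd F by rewrite -Hb mem_nth.
exists F; split => //.
have ia := idx_uniq (occ_le1 a F) Hk Ha.
have ib := idx_uniq (occ_le1 b F) Hk' Hb.
have nsa : (s a == i) = false.
  by apply/negP => /eqP se; have := HQloop a; rewrite se ta eqxx.
rewrite /cyc nsa sb eqxx ia ib.
case: (ltngtP k.+1 (size (bnd F))) => H.
- by rewrite addn1 modn_small.
- by move: H; rewrite ltnNge Hk.
- by rewrite addn1 H modnn rot0 rot_size.
Qed.

Lemma fca i c : face_cycle_at s bnd i c ->
  exists b F, [/\ b \in bnd F, s b = i, c = cyc i b F & valid (i, c) && (pend t (i, c) == i)].
Proof.
case=> F [k Hk [-> Hh]].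
have [Hc _] := HQcyc F.
move: Hh; case E: (rot k (bnd F)) => [//|b rest] /eqP sb.
have Eb : nth b (bnd F) k = b by move: E; rewrite /rot (drop_nth b Hk) => -[].
have bF : b \in bnd F by rewrite -Eb mem_nth.
exists b, F; split => //.
  by rewrite /cyc sb eqxx (idx_uniq (occ_le1 b F) Hk Eb) E.
have := Hc; rewrite -(rot_cycle k) E => Hc'.
rewrite pend_cycle // sb eqxx andbT /valid_path /= sb eqxx /=.
by move: Hc'; rewrite /= rcons_path => /andP [].
Qed.

Variable u : Q0 -> seq Q1.
Hypothesis Hu : forall i, face_cycle_at s bnd i (u i).

Definition Good i e := forall G, e \in bnd G -> psim (i, cyc i e G) (i, u i).

Lemma good_step i e e' : incid_sym s t bnd i e e' -> Good i e -> Good i e'.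
Proof.
have key : forall a b, incid s t bnd i a b -> arrow_at s t i a /\ arrow_at s t i b.
  by move=> a b /and3P [ta sb _]; rewrite /arrow_at ta sb orbT.
move=> He Ge G g; case/orP: He => He.
- have [F [eF e'F E]] := incid_cyc He.
  have [_ Ae'] := key _ _ He.
  apply: psim_trans (cyc_faces Ae' g e'F) _; rewrite -E; exact: Ge.
- have [F [e'F eF E]] := incid_cyc He.
  have [Ae' _] := key _ _ He.
  apply: psim_trans (cyc_faces Ae' g e'F) _; rewrite E; exact: Ge.
Qed.

Lemma all_good i e : arrow_at s t i e -> Good i e.
Proof.
move=> Ae.
have [b [F0 [bF sb E _]]] := fca (Hu i).
have Gb : Good i b.
  move=> G g; rewrite E; apply: cyc_faces => //.
  by rewrite /arrow_at sb eqxx.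
have Ab : arrow_at s t i b by rewrite /arrow_at sb eqxx.
case: HQ => _ _ _ Hconn; have [_ Hc] := Hconn i.
move: (Hc _ _ Ab Ae) => /connectP [p Hp ->].
elim: p b Hp Gb {Ab E bF sb} => [//|c p IH] b /= /andP [Hbc Hp] Gb.
by apply: IH => //; apply: good_step Hbc Gb.
Qed.

Lemma u_valid i : valid (i, u i) && (pend t (i, u i) == i).
Proof. by have [b [F [_ _ _ H]]] := fca (Hu i). Qed.

Lemma u_pend i : pend t (i, u i) = i.
Proof. by have /andP [_ /eqP] := u_valid i. Qed.

Lemma arrow_lem a : psim (s a, u (s a) ++ [:: a]) (s a, a :: u (t a)).
Proof.
have [F aF] : exists F, a \in bnd F.
  case: (boolP [exists F, a \in bnd F]) => [/existsP //|/existsPn H].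
  have H0 : face_occ bnd a = 0%N.
    by rewrite /face_occ big1 // => F _; apply/count_memPn; apply: H.
  by case: HQ => _ _ Hocc _; case: (Hocc a); rewrite H0 // => -[].
have Ai : arrow_at s t (s a) a by rewrite /arrow_at eqxx.
have Aj : arrow_at s t (t a) a by rewrite /arrow_at eqxx orbT.
have Va : valid (s a, [:: a]) by rewrite /valid_path /= eqxx.
have E1 := cyc_out (erefl (s a)) aF.
have E2 := cyc_in (erefl (t a)) aF.
apply: (@psim_trans _ _ _ _ _ _ _ _ _ (pcat (s a, cyc (s a) a F) (s a, [:: a]))).
  have -> : (s a, u (s a) ++ [:: a]) = pcat (s a, u (s a)) (s a, [:: a]) by [].
  apply: psim_catr => //.
  - by apply: psim_sym; apply: all_good.
  - exact: u_pend.
  - by rewrite E1 pend_pcat // pend_pface.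
have -> : pcat (s a, cyc (s a) a F) (s a, [:: a]) = pcat (s a, [:: a]) (t a, cyc (t a) a F).
  by case: E1 => ->; case: E2 => ->.
have -> : (s a, a :: u (t a)) = pcat (s a, [:: a]) (t a, u (t a)) by [].
by apply: psim_catl => //; apply: all_good.
Qed.

Lemma path_lem l : forall i, valid (i, l) -> psim (i, u i ++ l) (i, l ++ u (pend t (i, l))).
Proof.
elim: l => [|a l IH] i.
  by move=> _; rewrite cats0; apply: psim_refl.
rewrite /valid_path /= => /andP [/eqP <- Hp].
have Vl : valid (t a, l).
  by case: l Hp {IH} => [|b l] //= /andP [/eqP e Hl]; rewrite /valid_path /= e eqxx Hl.
apply: (@psim_trans _ _ _ _ _ _ _ _ _ (pcat (s a, a :: u (t a)) (t a, l))).
  have -> : (s a, u (s a) ++ a :: l) = pcat (s a, u (s a) ++ [:: a]) (t a, l)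
    by rewrite /pcat /= -catA.
  apply: psim_catr => //; first exact: arrow_lem.
    by rewrite /pend /= map_cat last_cat.
  by have := u_pend (t a); rewrite /pend.
have -> : pcat (s a, a :: u (t a)) (t a, l) = pcat (s a, [:: a]) (t a, u (t a) ++ l) by [].
have -> : (s a, (a :: l) ++ u (pend t (s a, a :: l))) =
  pcat (s a, [:: a]) (t a, l ++ u (pend t (t a, l))) by [].
by apply: psim_catl => //; [apply: IH | rewrite /valid_path /= eqxx].
Qed.

Definition ttof : elt := flatten [seq epath K (i, u i) | i <- enum Q0].

Lemma lin_tt (S : seq Q0) G : lin (flatten [seq epath K (i, u i) | i <- S]) G = \sum_(i <- S) G (i, u i).
Proof.
elim: S => [|i S IH] /=; first by rewrite lin_nil big_nil.
by rewrite lin_cons IH big_cons mul1r.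
Qed.

Lemma velt_tt (S : seq Q0) : velt (flatten [seq epath K (i, u i) | i <- S]).
Proof.
elim: S => [//|i S IH] /=.
by rewrite /valid_elt /= in IH *; rewrite IH andbT; case/andP: (u_valid i).
Qed.

Lemma tt_l q : eqv (emul t ttof (epath K q)) (epath K (q.1, u q.1 ++ q.2)).
Proof.
move=> p; rewrite !coefE lin_emul lin_tt lin_cons lin_nil mul1r addr0.
under eq_bigr => i _ do rewrite lin_cons lin_nil mul1r addr0 u_pend.
by rewrite (@sum_pred1 _ _ (enum Q0) q.1 (fun i => (pcat (i, u i) q == p)%:R)) ?enum_uniq ?mem_enum.
Qed.

Lemma tt_r q : eqv (emul t (epath K q) ttof) (epath K (q.1, q.2 ++ u (pend t q))).
Proof.
move=> p; rewrite !coefE lin_emul lin_cons lin_nil mul1r addr0 lin_tt lin_cons lin_nil mul1r addr0.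
under eq_bigr => i _ do rewrite /= eq_sym.
by rewrite (@sum_pred1 _ _ (enum Q0) (pend t q) (fun i => (pcat q (i, u i) == p)%:R)) ?enum_uniq ?mem_enum.
Qed.

Lemma Cen_tt : Central s t bnd pos ttof.
Proof.
elim=> [|[c q] x IH] /=.
  by move=> _; apply: I_zero => p; rewrite coef_esub emul_nill (emul_nilr _ _ p) coef_nil subrr.
case/andP => Vq Vx.
have Pq : I (esub (emul t ttof (epath K q)) (emul t (epath K q) ttof)).
  case: q Vq => q1 q2 Vq.
  apply: I_eqv (path_lem Vq) _.
  by apply: eqv_esub; apply: eqv_sym; [apply: tt_l | apply: tt_r].
apply: I_eqv (I_cat (I_escale c Pq) (IH Vx)) _ => p.
rewrite coef_cat coef_escale !coef_esub -cat1s (emul_catr _ _ _ _ p) emul_catl.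
rewrite [[:: (c, q)]]single_escale (coef_cat (emul t ttof (escale c (epath K q)))).
rewrite (coef_cat (emul t (escale c (epath K q)) ttof)).
rewrite (emul_scaler _ _ _ _ p) (emul_scalel _ _ _ _ p) !coef_escale.
ring.
Qed.

End Dimer.

Unset Implicit Arguments.

Theorem lemma1p8 (Q0 Q1 Q2 : finType) (s t : Q1 -> Q0)
  (bnd : Q2 -> seq Q1) (pos : Q2 -> bool)
  (HQ : is_dimer_quiver s t bnd pos)
  (u : Q0 -> seq Q1) (Hu : forall i, face_cycle_at s bnd i (u i)) :
  let tt : elt Q0 Q1 Cplx := flatten [seq epath Cplx (i, u i) | i <- enum Q0] in
  forall (P : {poly Cplx}) (x : elt Q0 Q1 Cplx), valid_elt s t x ->
    in_dimer_ideal s t bnd pos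
      (esub (emul t (epoly t P tt) x) (emul t x (epoly t P tt))).
Proof.
move=> tt P x Hx.
have [_ C] := Cen_foldr (velt_tt Cplx HQ Hu (enum Q0)) (Cen_tt HQ Hu) P.
exact: C.
Qed.
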